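(* Let $B,M,K,L$ be positive integers with $N=BM=K$, and let $P>0$, $C>0$. Let $a_{bk}>0$ and define $v_{ij}=a_{\lceil i/M\rceil j}$ for $i=1,\dots,N$, $j=1,\dots,K$. Define $$\sigma_i^2=\frac{1+\frac{P}{L}\sum_{j=1}^K v_{ij}}{2^{C/(ML)}-1},\quad \hat v_{ij}(\tau)=\frac{\tau\frac{P}{L}v_{ij}^2}{\tau\frac{P}{L}v_{ij}+1+\sigma_i^2},\quad \tilde v_{ij}(\tau)=\frac{v_{ij}(1+\sigma_i^2)}{\tau\frac{P}{L}v_{ij}+1+\sigma_i^2},$$ $$\overline v_{ij}(\tau)=\frac{\hat v_{ij}(\tau)}{1+\sigma_i^2+\frac{P}{L}\sum_{\ell=1}^K\tilde v_{i\ell}(\tau)},\qquad \mathbf D_j(\tau)=\mathrm{diag}(\overline v_{1j}(\tau),\dots,\overline v_{Nj}(\tau)).$$ Assume that for every $\tau>0$ the matrix $\overline{\mathbf V}(\tau)=(\overline v_{ij}(\tau))$ is doubly regular, i.e. there is $\mathcal K(\tau)$ with $$\mathcal K(\tau)=\frac1N\sum_{i=1}^N\overline v_{ik}(\tau)=\frac1N\sum_{j=1}^N\overline v_{\ell j}(\tau)\quad\text{for all }k,\ell.$$ Let $\mathbf T_P=\mathbf T(-\frac{L}{KP})$ with $\mathbf T(z)$ as in the context, and $$\overline R(\tau)=\frac1N\sum_{j=1}^K\log\Big(1+\tfrac1K\mathrm{tr}\,\mathbf D_j(\tau)\mathbf T_P\Big)-\frac1N\log\det\Big(\tfrac{L}{KP}\mathbf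 T_P\Big)-\frac1N\sum_{j=1}^K\frac{\frac1K\mathrm{tr}\,\mathbf D_j(\tau)\mathbf T_P}{1+\frac1K\mathrm{tr}\,\mathbf D_j(\tau)\mathbf T_P}.$$ Then $\overline R(\tau)$ is a strictly concave function of $\tau>0$.
   Context: $\log$ is the natural logarithm. Let $\mathbb C_+=\{z\in\mathbb C:\Im z>0\}$ and let $\mathcal S$ be the class of functions $f$ analytic on $\mathbb C\setminus\mathbb R_+$ such that $f(z)\in\mathbb C_+$ and $zf(z)\in\mathbb C_+$ for $z\in\mathbb C_+$, and $\lim_{y\to\infty}-\mathrm{i}y f(\mathrm{i}y)=1$. For fixed $\tau$, $\mathbf T(z)=\mathrm{diag}(t_1(z),\dots,t_N(z))$ denotes the unique solution with $(t_1,\dots,t_N)\in\mathcal S^N$ of $$\mathbf T(z)=\Big(\frac1K\sum_{j=1}^K\frac{\mathbf D_j(\tau)}{1+\frac1K\mathrm{tr}\,\mathbf D_j(\tau)\mathbf T(z)}-z\mathbf I_N\Big)^{-1}.$$ *)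

(* Defs.v *)
From HB Require Import structures.
From mathcomp Require Import all_boot all_order all_algebra.
From mathcomp Require Import complex.
From mathcomp Require Import all_classical all_reals all_analysis.
Set Implicit Arguments. Unset Strict Implicit. Unset Printing Implicit Defensive.
Import Order.TTheory GRing.Theory Num.Theory.
Import numFieldNormedType.Exports.
Local Open Scope ring_scope.
Local Open Scope complex_scope.
Local Open Scope classical_set_scope.

(* The complex plane seen as a normed module over itself (for complex
   differentiability and limits). Convertible to R[i]. *)
Definition CC (R : realType) := ((R[i])^o)%type.

Definition notRplus (R : realType) (z : R[i]) : Prop :=
  ~ (complex.Im z = 0 /\ 0 <= complex.Re z).

(* The class S of the paper. Analyticity on the open set C \ R_+ is
   expressed as complex differentiability at every point of it. *)
Definition in_S (R : realType) (f : R[i] -> R[i]) : Prop :=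
  (forall z : R[i], notRplus z -> derivable (f : CC R -> CC R) (z : CC R) 1)
  /\ (forall z : R[i], 0 < complex.Im z -> 0 < complex.Im (f z) /\ 0 < complex.Im (z * f z))
  /\ ((fun y : R => (- 'i * y%:C * f ('i * y%:C) : CC R)) @ +oo
        --> (1 : CC R)).

(* v_{ij} = a_{ceil(i/M), j}  (0-indexed: block index i %/ M) *)
Definition vv (R : realType) (M : nat) (a : nat -> nat -> R) (i j : nat) : R :=
  a (i %/ M)%N j.

Definition sigma2 (R : realType) (M K L : nat) (P C : R) (a : nat -> nat -> R)
  (i : nat) : R :=
  (1 + P / L%:R * \sum_(j < K) vv M a i j) / (2 `^ (C / (M * L)%:R) - 1).

Definition vhat (R : realType) (M K L : nat) (P C : R) (a : nat -> nat -> R)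
  (tau : R) (i j : nat) : R :=
  tau * (P / L%:R) * (vv M a i j) ^+ 2 /
    (tau * (P / L%:R) * vv M a i j + 1 + sigma2 M K L P C a i).

Definition vtil (R : realType) (M K L : nat) (P C : R) (a : nat -> nat -> R)
  (tau : R) (i j : nat) : R :=
  vv M a i j * (1 + sigma2 M K L P C a i) /
    (tau * (P / L%:R) * vv M a i j + 1 + sigma2 M K L P C a i).

Definition vbar (R : realType) (M K L : nat) (P C : R) (a : nat -> nat -> R)
  (tau : R) (i j : nat) : R :=
  vhat M K L P C a tau i j /
    (1 + sigma2 M K L P C a i + P / L%:R * \sum_(l < K) vtil M K L P C a tau i l).

Definition Dmat (R : realType) (N M K L : nat) (P C : R) (a : nat -> nat -> R)
  (tau : R) (j : nat) : 'M[R]_N :=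
  diag_mx (\row_(i < N) vbar M K L P C a tau i j).

Definition T_eq (R : realType) (N K : nat) (D : nat -> 'M[R]_N)
  (t : 'I_N -> R[i] -> R[i]) (z : R[i]) : Prop :=
  let Tz : 'M[R[i]]_N := diag_mx (\row_(i < N) t i z) in
  let Dc (j : nat) : 'M[R[i]]_N := map_mx (fun x : R => x%:C) (D j) in
  let A : 'M[R[i]]_N :=
    (K%:R^-1) *: (\sum_(j < K) ((1 + K%:R^-1 * \tr (Dc j *m Tz))^-1 *: Dc j))
    - z%:M in
  A \in unitmx /\ Tz = invmx A.

Definition is_T_solution (R : realType) (N K : nat) (D : nat -> 'M[R]_N)
  (t : 'I_N -> R[i] -> R[i]) : Prop :=
  (forall i, in_S (t i)) /\ (forall z : R[i], notRplus z -> T_eq K D t z).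

(* T_P = T(-L/(KP)) as a real diagonal matrix (real parts; T_P is real). *)
Definition TPmat (R : realType) (N K L : nat) (P : R)
  (t : 'I_N -> R[i] -> R[i]) : 'M[R]_N :=
  diag_mx (\row_(i < N) complex.Re (t i ((- (L%:R / (K%:R * P)))%:C))).

Definition Rbar (R : realType) (N M K L : nat) (P C : R) (a : nat -> nat -> R)
  (t : R -> 'I_N -> R[i] -> R[i]) (tau : R) : R :=
  let TP := TPmat K L P (t tau) in
  let trj (j : nat) := K%:R^-1 * \tr (Dmat N M K L P C a tau j *m TP) in
  N%:R^-1 * (\sum_(j < K) ln (1 + trj j))
  - N%:R^-1 * ln (\det ((L%:R / (K%:R * P)) *: TP))
  - N%:R^-1 * (\sum_(j < K) (trj j / (1 + trj j))).

Definition strictly_concave_pos (R : realType) (f : R -> R) : Prop :=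
  forall x y lam : R, 0 < x -> 0 < y -> x != y -> 0 < lam < 1 ->
    lam * f x + (1 - lam) * f y < f (lam * x + (1 - lam) * y).

(* Main.v *)
Require Import Defs.
From HB Require Import structures.
From mathcomp Require Import all_boot all_order all_algebra.
From mathcomp Require Import complex.
From mathcomp Require Import all_classical all_reals all_analysis.
From mathcomp Require Import ring lra.
Import Order.TTheory GRing.Theory Num.Theory.
Import numFieldNormedType.Exports.
Local Open Scope ring_scope.
Local Open Scope complex_scope.


Lemma cont_eps (R : realType) (f : R[i] -> R[i]) (z0 : R[i]) :
  derivable (f : CC R -> CC R) (z0 : CC R) 1 ->
  forall e : R, 0 < e -> exists2 d : R, 0 < d &
    forall z : R[i], `|z0 - z| < d%:C -> `|f z0 - f z| < e%:C.
Proof.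
move=> /derivable1_diffP /differentiable_continuous hc e he.
have he' : (0 : CC R) < e%:C by rewrite ltcR.
move: hc => /cvgrPdist_lt /(_ _ he').
move=> /nbhs_ballP [[a b] /= d0 hd].
move: d0; rewrite ltcE /= => /andP [/eqP hb ha].
exists a => // z hz. apply: hd. rewrite /ball /= hb. exact: hz.
Qed.

Lemma normc_ReIm (R : realType) (w : R[i]) (e : R) :
  `|w| < e%:C -> `|complex.Re w| < e /\ `|complex.Im w| < e.
Proof.
rewrite normc_def ltcR => h; split; apply: le_lt_trans h;
  rewrite -sqrtr_sqr; apply: ler_wsqrtr.
- by rewrite lerDl sqr_ge0.
- by rewrite lerDr sqr_ge0.
Qed.

Lemma norm_iy (R : realType) (y : R) : 0 <= y -> `|(0 +i* y : R[i])| = y%:C.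
Proof. move=> hy; rewrite normc_def /= expr0n /= add0r sqrtr_sqr ger0_norm //. Qed.

Lemma Im_mul (R : realType) (a b c d : R) :
  complex.Im ((a +i* b) * (c +i* d)) = a * d + b * c.
Proof. by []. Qed.

Lemma ImB (R : realType) (x y : R[i]) : complex.Im (x - y) = complex.Im x - complex.Im y.
Proof. by case: x; case: y. Qed.
Lemma ReB (R : realType) (x y : R[i]) : complex.Re (x - y) = complex.Re x - complex.Re y.
Proof. by case: x; case: y. Qed.

Lemma S_neg_real (R : realType) (f : R[i] -> R[i]) (s : R) :
  0 < s -> in_S f -> complex.Im (f (-s)%:C) = 0 /\ 0 <= complex.Re (f (-s)%:C).
Proof.
move=> s0 [hd [hI _]].
set z0 := (-s)%:C.
have nz : notRplus z0 by rewrite /notRplus /= => -[_]; rewrite oppr_ge0 leNgt s0.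
have hc := @cont_eps _ _ _ (hd z0 nz).
have key : forall eps, 0 < eps -> 0 < complex.Im (f ((-s) +i* eps)) /\
    0 < - s * complex.Im (f ((-s) +i* eps)) + eps * complex.Re (f ((-s) +i* eps)).
  move=> eps he; have := hI ((-s) +i* eps) he.
  by case: (f _) => c d /= [h1 h2]; split.
have dist : forall eps, 0 <= eps -> `|z0 - ((-s) +i* eps)| = eps%:C.
  move=> eps he; rewrite normc_def /= subrr expr0n /= add0r sub0r sqrrN sqrtr_sqr.
  by rewrite ger0_norm.
have hnear : forall e, 0 < e -> exists2 eps0, 0 < eps0 & forall eps, 0 < eps -> eps <= eps0 ->
    `|complex.Re (f z0) - complex.Re (f ((-s) +i* eps))| < e /\
    `|complex.Im (f z0) - complex.Im (f ((-s) +i* eps))| < e.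
  move=> e he; have [d d0 hdd] := hc e he.
  exists (d / 2); first by lra.
  move=> eps he1 he2; rewrite -ReB -ImB; apply: (@normc_ReIm R); apply: hdd.
  by rewrite dist ?ltcR; lra.
have hIm0 : 0 <= complex.Im (f z0).
  rewrite leNgt; apply/negP => hneg.
  have [d d0 hdd] : exists2 eps0, 0 < eps0 & _ := hnear (- complex.Im (f z0)) ltac:(by rewrite oppr_gt0).
  have [_ /ltr_normlP [h1 h2]] := hdd d d0 (lexx _).
  have [k1 _] := key d d0. lra.
have hRe0 : 0 <= complex.Re (f z0).
  rewrite leNgt; apply/negP => hneg.
  have [d d0 hdd] : exists2 eps0, 0 < eps0 & _ := hnear (- complex.Re (f z0)) ltac:(by rewrite oppr_gt0).
  have [/ltr_normlP [h1 h2] _] := hdd d d0 (lexx _).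
  have [k1 k2] := key d d0.
  have : d * complex.Re (f ((-s) +i* d)) < 0.
    by rewrite pmulr_rlt0 //; lra.
  have : 0 < s * complex.Im (f ((-s) +i* d)) by rewrite mulr_gt0.
  lra.
split=> //; apply/eqP; rewrite eq_le hIm0 andbT leNgt; apply/negP => hpos.
set m := `|complex.Re (f z0)| + complex.Im (f z0) / 2 + 1.
have m0 : 0 < m.
  by rewrite /m; have := normr_ge0 (complex.Re (f z0)); lra.
have [d d0 hdd] : exists2 eps0, 0 < eps0 & _ := hnear (complex.Im (f z0) / 2) ltac:(by lra).
set eps := Num.min d (s * complex.Im (f z0) / 2 / m).
have eps0 : 0 < eps by rewrite lt_min d0 /= !divr_gt0 // ?mulr_gt0 //; lra.
have [/ltr_normlP [h1 h2] /ltr_normlP [h3 h4]] := hdd eps eps0 ltac:(by rewrite ge_min lexx).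
have [k1 k2] := key eps eps0.
have hRem : complex.Re (f ((-s) +i* eps)) < m.
  have := ler_norm (complex.Re (f z0)); rewrite /m; lra.
have p1 : eps * complex.Re (f ((-s) +i* eps)) < eps * m by rewrite ltr_pM2l.
have p2' : eps <= s * complex.Im (f z0) / 2 / m.
  by rewrite /eps ge_min lexx orbT.
have p2 : eps * m <= s * complex.Im (f z0) / 2 by rewrite -ler_pdivlMr.
have p3 : s * (complex.Im (f z0) / 2) < s * complex.Im (f ((-s) +i* eps)).
  rewrite ltr_pM2l //; lra.
lra.
Qed.

Lemma Aii (R : realType) (N K : nat) (vb : nat -> nat -> R) (r : 'I_N -> R) (z : R) (i : 'I_N) :
  let Tz : 'M[R[i]]_N := diag_mx (\row_(i < N) (r i)%:C) in
  let Dc (j : nat) : 'M[R[i]]_N := map_mx (fun x : R => x%:C) (diag_mx (\row_(i < N) vb i j)) in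
  let A : 'M[R[i]]_N :=
    (K%:R^-1) *: (\sum_(j < K) ((1 + K%:R^-1 * \tr (Dc j *m Tz))^-1 *: Dc j))
    - z%:C%:M in
  A i i = (K%:R^-1 * \sum_(j < K) ((1 + K%:R^-1 * \sum_(l < N) vb l j * r l)^-1 * vb i j) - z)%:C.
Proof.
move=> Tz Dc A.
rewrite /A !mxE summxE rmorphB rmorphM rmorph_sum fmorphV rmorph_nat eqxx mulr1n /=.
congr (_ * _ - _).
apply: eq_bigr => j _; rewrite !mxE eqxx mulr1n rmorphM fmorphV rmorphD rmorph1 rmorphM fmorphV rmorph_nat.
congr ((1 + _ * _)^-1 * _).
rewrite /mxtrace rmorph_sum; apply: eq_bigr => l _.
by rewrite mul_mx_diag !mxE eqxx mulr1n rmorphM.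
Qed.

Lemma T_fixed (R : realType) (N : nat) (vb : nat -> nat -> R) (t : 'I_N -> R[i] -> R[i]) (s : R) :
  0 < s -> is_T_solution N (fun j => diag_mx (\row_(i < N) vb i j)) t ->
  exists r : 'I_N -> R, (forall i, 0 < r i) /\ (forall i, t i (-s)%:C = (r i)%:C) /\
    (forall i, r i * (N%:R^-1 * \sum_(j < N) ((1 + N%:R^-1 * \sum_(l < N) vb l j * r l)^-1 * vb i j) + s) = 1).
Proof.
move=> s0 [hS hT].
pose r i := complex.Re (t i (-s)%:C).
have hr : forall i, t i (-s)%:C = (r i)%:C.
  move=> i; have [h _] := @S_neg_real _ _ _ s0 (hS i).
  by rewrite /r; case: (t i _) h => a b /= ->.
have nz : notRplus (-s)%:C by rewrite /notRplus /= => -[_]; rewrite oppr_ge0 leNgt s0.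
have [hu hTz] := hT _ nz.
have eT : diag_mx (\row_(i < N) t i (-s)%:C) = diag_mx (\row_(i < N) (r i)%:C).
  by congr diag_mx; apply/rowP => i; rewrite !mxE hr.
rewrite eT in hTz hu.
have e1 := mulVmx hu; rewrite -hTz in e1.
have eq1 : forall i, r i * (N%:R^-1 * \sum_(j < N) ((1 + N%:R^-1 * \sum_(l < N) vb l j * r l)^-1 * vb i j) + s) = 1.
  move=> i; have := congr1 (fun M : 'M[R[i]]_N => M i i) e1.
  rewrite mul_diag_mx [LHS]mxE (@Aii R N N vb r (-s) i) mxE [in RHS]mxE eqxx mulr1n.
  rewrite -rmorphM => /(congr1 (@complex.Re R)) /= .
  by rewrite opprK.
exists r; split; last by split.
move=> i; have [_ h] := @S_neg_real _ _ _ s0 (hS i).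
rewrite lt_neqAle h andbT; apply/eqP => h0.
by have := eq1 i; rewrite -h0 mul0r => /eqP; rewrite eq_sym oner_eq0.
Qed.


Lemma inv_le (R : realFieldType) (a b : R) : 0 < a -> a <= b -> b^-1 <= a^-1.
Proof. move=> a0 ab; rewrite lef_pV2 // posrE //; exact: lt_le_trans ab. Qed.

Lemma fixed_bound (R : realFieldType) (N : nat) (vb : nat -> nat -> R) (r : 'I_N -> R) (s x : R) (m : 'I_N) (rr : R) :
  0 <= x -> (forall i j : 'I_N, 0 <= vb i j) -> (forall i, 0 < r i) ->
  (forall k : 'I_N, \sum_(i<N) vb i k = N%:R * x) ->
  (forall l : 'I_N, \sum_(j<N) vb l j = N%:R * x) ->
  (forall l, r l <= rr) ->
  x / (1 + x * rr) <= N%:R^-1 * \sum_(j < N) ((1 + N%:R^-1 * \sum_(l < N) vb l j * r l)^-1 * vb m j).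
Proof.
move=> x0 vb0 r0 col row hrr.
have N0 : (0 < N)%N by case: N m {col row hrr r0 vb0 r} => [[]|].
have N0' : 0 < N%:R :> R by rewrite ltr0n.
have rr0 : 0 < rr by apply: lt_le_trans (r0 m) (hrr m).
have h1 : forall j : 'I_N, (1 + x * rr)^-1 * vb m j <=
    (1 + N%:R^-1 * \sum_(l < N) vb l j * r l)^-1 * vb m j.
  move=> j; apply: ler_wpM2r => //; apply: inv_le.
    rewrite ltr_pwDl // mulr_ge0 ?invr_ge0 ?ler0n //.
    by apply: sumr_ge0 => l _; rewrite mulr_ge0 // ltW.
  rewrite lerD2l.
  have : \sum_(l < N) vb l j * r l <= \sum_(l < N) vb l j * rr.
    by apply: ler_sum => l _; apply: ler_wpM2l.
  rewrite -mulr_suml col => h.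
  rewrite mulrC ler_pdivrMr //; apply: le_trans h _.
  by rewrite [X in _ <= X]mulrC mulrA.
apply: le_trans (ler_wpM2l _ (ler_sum _ (fun j _ => h1 j))); last by rewrite invr_ge0 ler0n.
rewrite -mulr_sumr row.
have -> : N%:R^-1 * ((1 + x * rr)^-1 * (N%:R * x)) = x / (1 + x * rr).
  by field; rewrite !gt_eqF // ltr_pwDl // mulr_ge0 // ltW.
by [].
Qed.

Lemma fixed_bound2 (R : realFieldType) (N : nat) (vb : nat -> nat -> R) (r : 'I_N -> R) (s x : R) (m : 'I_N) (rr : R) :
  0 <= x -> (forall i j : 'I_N, 0 <= vb i j) -> (forall i, 0 < r i) ->
  (forall k : 'I_N, \sum_(i<N) vb i k = N%:R * x) ->
  (forall l : 'I_N, \sum_(j<N) vb l j = N%:R * x) ->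
  (forall l, rr <= r l) -> 0 < rr ->
  N%:R^-1 * \sum_(j < N) ((1 + N%:R^-1 * \sum_(l < N) vb l j * r l)^-1 * vb m j) <= x / (1 + x * rr).
Proof.
move=> x0 vb0 r0 col row hrr rr0.
have N0 : (0 < N)%N by case: N m {col row hrr r0 vb0 r} => [[]|].
have N0' : 0 < N%:R :> R by rewrite ltr0n.
have h1 : forall j : 'I_N, (1 + N%:R^-1 * \sum_(l < N) vb l j * r l)^-1 * vb m j <=
    (1 + x * rr)^-1 * vb m j.
  move=> j; apply: ler_wpM2r => //; apply: inv_le.
    by rewrite ltr_pwDl // mulr_ge0 // ltW.
  rewrite lerD2l.
  have : \sum_(l < N) vb l j * rr <= \sum_(l < N) vb l j * r l.
    by apply: ler_sum => l _; apply: ler_wpM2l.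
  rewrite -mulr_suml col => h.
  rewrite [N%:R^-1 * _]mulrC ler_pdivlMr //; apply: le_trans h.
  by rewrite [X in X <= _]mulrC mulrA.
apply: le_trans (ler_wpM2l _ (ler_sum _ (fun j _ => h1 j))) _; first by rewrite invr_ge0 ler0n.
rewrite -mulr_sumr row.
have -> : N%:R^-1 * ((1 + x * rr)^-1 * (N%:R * x)) = x / (1 + x * rr).
  by field; rewrite !gt_eqF // ltr_pwDl // mulr_ge0 // ltW.
by [].
Qed.

Lemma fixed_unique (R : realFieldType) (N : nat) (vb : nat -> nat -> R) (r : 'I_N -> R) (s x : R) (i0 : 'I_N) :
  0 < s -> 0 <= x -> (forall i j : 'I_N, 0 <= vb i j) -> (forall i, 0 < r i) ->
  (forall k : 'I_N, \sum_(i<N) vb i k = N%:R * x) ->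
  (forall l : 'I_N, \sum_(j<N) vb l j = N%:R * x) ->
  (forall i, r i * (N%:R^-1 * \sum_(j < N) ((1 + N%:R^-1 * \sum_(l < N) vb l j * r l)^-1 * vb i j) + s) = 1) ->
  forall i, r i = r i0.
Proof.
move=> s0 x0 vb0 r0 col row eq.
case: (@arg_maxP _ _ _ i0 xpredT r isT) => iM _ HM.
case: (@arg_minP _ _ _ i0 xpredT r isT) => im _ Hm.
have HM' : forall l, r l <= r iM by move=> l; exact: HM.
have Hm' : forall l, r im <= r l by move=> l; exact: Hm.
have bM := @fixed_bound R N vb r s x iM (r iM) x0 vb0 r0 col row HM'.
have bm := @fixed_bound2 R N vb r s x im (r im) x0 vb0 r0 col row Hm' (r0 im).
have eM := eq iM; have em := eq im.
set EM := N%:R^-1 * _ in eM bM; set Em := N%:R^-1 * _ in em bm.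
have rM0 := r0 iM; have rm0 := r0 im.
have le1 : r iM * (x / (1 + x * r iM) + s) <= 1.
  apply: (@le_trans _ _ (r iM * (EM + s))); last by rewrite eM.
  by apply: ler_wpM2l; [exact: ltW| rewrite lerD2r].
have le2 : 1 <= r im * (x / (1 + x * r im) + s).
  apply: (@le_trans _ _ (r im * (Em + s))); first by rewrite em.
  by apply: ler_wpM2l; [exact: ltW| rewrite lerD2r].
have hMm : r iM <= r im.
  rewrite leNgt; apply/negP => hlt.
  have q1 : r im * (x / (1 + x * r im)) <= r iM * (x / (1 + x * r iM)).
    have d1 : 0 < 1 + x * r im by rewrite ltr_pwDl // mulr_ge0 // ltW.
    have d2 : 0 < 1 + x * r iM by rewrite ltr_pwDl // mulr_ge0 // ltW.
    rewrite !mulrA ler_pdivrMr // mulrAC ler_pdivlMr //.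
    have : r im * x <= r iM * x by rewrite ler_wpM2r // ltW.
    nra.
  nra.
move=> i; apply/eqP; rewrite eq_le; apply/andP; split.
  by apply: le_trans (HM' i) (le_trans hMm (Hm' i0)).
by apply: le_trans (HM' i0) (le_trans hMm (Hm' i)).
Qed.

Set Implicit Arguments. Unset Strict Implicit.
Section Scalar.
Variable R : realType.
Implicit Types a b x : R.

Lemma ln_le_sub1 x : 0 < x -> ln x <= x - 1.
Proof. move=> x0; have := expR_ge1Dx (ln x); rewrite lnK ?posrE //; lra. Qed.

Lemma ln_lt_sub1 x : 0 < x -> x != 1 -> ln x < x - 1.
Proof.
move=> x0 x1; have := @expR_gt1Dx R (ln x); rewrite lnK ?posrE // ln_eq0 // => /(_ x1); lra.
Qed.

Definition Phi a := 2 * ln a - (a - 1) / a.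

Lemma phi_aux a b : 1 <= a -> 1 <= b ->
  2 * (a / b - 1) - (a - 1) / a + (b - 1) / b - (a * (a - 1) - b * (b - 1)) / b ^+ 2 <= 0.
Proof.
move=> a1 b1.
have a0 : a != 0 by rewrite gt_eqF //; lra.
have b0 : b != 0 by rewrite gt_eqF //; lra.
have -> : 2 * (a / b - 1) - (a - 1) / a + (b - 1) / b - (a * (a - 1) - b * (b - 1)) / b ^+ 2
   = ((a - b) ^+ 2 * (1 - a)) * (a * b ^+ 2)^-1.
  by field; rewrite a0 b0.
apply: mulr_le0_ge0; last by rewrite invr_ge0 mulr_ge0 ?sqr_ge0 //; lra.
by apply: mulr_ge0_le0; [exact: sqr_ge0 | lra].
Qed.

Lemma phi_tangent a b : 1 <= a -> 1 <= b ->
  Phi a <= Phi b + (a * (a - 1) - b * (b - 1)) / b ^+ 2.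
Proof.
move=> a1 b1; have a0 : 0 < a by lra. have b0 : 0 < b by lra.
have := phi_aux a1 b1.
have := ln_le_sub1 (divr_gt0 a0 b0); rewrite ln_div ?posrE //.
rewrite /Phi; lra.
Qed.

Lemma phi_tangent_strict a b : 1 <= a -> 1 <= b -> a != b ->
  Phi a < Phi b + (a * (a - 1) - b * (b - 1)) / b ^+ 2.
Proof.
move=> a1 b1 ab; have a0 : 0 < a by lra. have b0 : 0 < b by lra.
have := phi_aux a1 b1.
have hab : a / b != 1.
  apply: contra ab => /eqP h; apply/eqP.
  by rewrite -[a](divfK (x := b)) ?h ?mul1r // gt_eqF.
have := ln_lt_sub1 (divr_gt0 a0 b0) hab; rewrite ln_div ?posrE //.
rewrite /Phi; lra.
Qed.

Lemma final_comb a1 a2 am w1 w2 wm lam :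
  1 <= a1 -> 1 <= a2 -> 1 <= am -> a1 != a2 -> 0 < lam < 1 ->
  a1 * (a1 - 1) = w1 -> a2 * (a2 - 1) = w2 -> am * (am - 1) = wm ->
  lam * w1 + (1 - lam) * w2 <= wm ->
  lam * Phi a1 + (1 - lam) * Phi a2 < Phi am.
Proof.
move=> h1 h2 hm n12 /andP [l0 l1] e1 e2 em hw.
have am0 : am != 0 by rewrite gt_eqF //; lra.
have hs : lam * ((w1 - wm) / am ^+ 2) + (1 - lam) * ((w2 - wm) / am ^+ 2) <= 0.
  have -> : lam * ((w1 - wm) / am ^+ 2) + (1 - lam) * ((w2 - wm) / am ^+ 2)
     = (lam * w1 + (1 - lam) * w2 - wm) * (am ^+ 2)^-1.
    by field; rewrite am0.
  by apply: mulr_le0_ge0; [lra | rewrite invr_ge0 sqr_ge0].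
rewrite -e1 -e2 -em in hs.
have l0' : 0 < 1 - lam by lra.
case: (eqVneq a1 am) => [e|n1].
  have n2 : a2 != am by rewrite -e eq_sym.
  have t1 := phi_tangent h1 hm.
  have t2 := phi_tangent_strict h2 hm n2.
  have := ler_wpM2l (ltW l0) t1; move: t2; rewrite -(ltr_pM2l l0'); lra.
have t1 := phi_tangent_strict h1 hm n1.
have t2 := phi_tangent h2 hm.
have := ler_wpM2l (ltW l0') t2; move: t1; rewrite -(ltr_pM2l l0); lra.
Qed.
End Scalar.

Set Implicit Arguments. Unset Strict Implicit.
Section Harm.
Variable R : realType.

Definition Gh n (b : 'I_n -> R) (t : R) := 1 + \sum_(l < n) (t + b l)^-1.

Lemma Gh_gt1 n (b : 'I_n -> R) t : (forall l, 0 < b l) -> 0 <= t -> 1 <= Gh b t.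
Proof.
move=> b0 t0; rewrite /Gh lerDl; apply: sumr_ge0 => l _.
by rewrite invr_ge0 ltW // ltr_wpDl.
Qed.

Lemma term_ineq (u t Y Z : R) : 0 < Y -> 0 < Z ->
  2 * t * u / Z - t ^+ 2 * Y / Z ^+ 2 <= u ^+ 2 / Y.
Proof.
move=> Y0 Z0; rewrite -subr_ge0.
have -> : u ^+ 2 / Y - (2 * t * u / Z - t ^+ 2 * Y / Z ^+ 2) = (u * Z - t * Y) ^+ 2 * (Y * Z ^+ 2)^-1.
  by field; rewrite !gt_eqF.
by rewrite mulr_ge0 ?sqr_ge0 // invr_ge0 mulr_ge0 ?sqr_ge0 // ltW.
Qed.

Lemma harm_bound n (b : 'I_n -> R) (tau taum : R) :
  (forall l, 0 < b l) -> 0 < tau -> 0 < taum ->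
  (Gh b tau)^-1 <= (Gh b taum)^-1 ^+ 2 * (1 + \sum_(l < n) (tau + b l) / (taum + b l) ^+ 2).
Proof.
move=> b0 t0 tm0.
set u := (Gh b tau)^-1; set t := (Gh b taum)^-1.
set SY := \sum_(l < n) (tau + b l)^-1.
set SZ := \sum_(l < n) (taum + b l)^-1.
set SQ := \sum_(l < n) (tau + b l) / (taum + b l) ^+ 2.
have G1 := Gh_gt1 b0 (ltW t0); have G2 := Gh_gt1 b0 (ltW tm0).
have eu : u * (1 + SY) = 1 by rewrite /u mulVf // gt_eqF //; lra.
have et : t * (1 + SZ) = 1 by rewrite /t mulVf // gt_eqF //; lra.
have hs : 2 * t * u * SZ - t ^+ 2 * SQ <= u ^+ 2 * SY.
  rewrite /SZ /SQ /SY !mulr_sumr -sumrB; apply: ler_sum => l _.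
  have Y0 : 0 < tau + b l by rewrite ltr_wpDl // ltW.
  have Z0 : 0 < taum + b l by rewrite ltr_wpDl // ltW.
  by rewrite !mulrA; apply: term_ineq.
have h0 : 2 * t * u - t ^+ 2 <= u ^+ 2.
  have := sqr_ge0 (u - t); rewrite sqrrB; lra.
have e1 : u ^+ 2 * SY + u ^+ 2 = u.
  by rewrite -[RHS]mulr1 -eu expr2; ring.
have e2 : 2 * t * u * SZ + 2 * t * u = 2 * u.
  by rewrite -[RHS]mulr1 -et; ring.
have e3 : t ^+ 2 * (1 + SQ) = t ^+ 2 + t ^+ 2 * SQ by ring.
rewrite e3; lra.
Qed.

Lemma harm_concave n (b : 'I_n -> R) (t1 t2 lam : R) :
  (forall l, 0 < b l) -> 0 < t1 -> 0 < t2 -> 0 <= lam <= 1 ->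
  lam * (Gh b t1)^-1 + (1 - lam) * (Gh b t2)^-1 <= (Gh b (lam * t1 + (1 - lam) * t2))^-1.
Proof.
move=> b0 t10 t20 /andP [l0 l1].
set tm := lam * t1 + (1 - lam) * t2.
have tm0 : 0 < tm.
  rewrite /tm; have := mulr_ge0 l0 (ltW t10); case: (ltrP lam 1) => h.
    have : 0 < (1 - lam) * t2 by apply: mulr_gt0 => //; lra.
    lra.
  have -> : lam = 1 by lra.
  by rewrite mul1r subrr mul0r addr0.
have B1 := harm_bound b0 t10 tm0.
have B2 := harm_bound b0 t20 tm0.
set t := (Gh b tm)^-1 in B1 B2 *.
have G2 := Gh_gt1 b0 (ltW tm0).
have et : t * Gh b tm = 1 by rewrite /t mulVf // gt_eqF //; lra.
have key : lam * (1 + \sum_(l < n) (t1 + b l) / (tm + b l) ^+ 2)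
   + (1 - lam) * (1 + \sum_(l < n) (t2 + b l) / (tm + b l) ^+ 2) = Gh b tm.
  rewrite /Gh !mulrDr !mulr1 !mulr_sumr addrACA -big_split /=.
  have -> : lam + (1 - lam) = 1 by ring.
  congr (_ + _); apply: eq_bigr => l _.
  have Z0 : tm + b l != 0 by rewrite gt_eqF // ltr_wpDl // ltW.
  rewrite /tm; field.
  by rewrite /tm in Z0.
have l0' : 0 <= 1 - lam by lra.
have := ler_wpM2l l0 B1; have := ler_wpM2l l0' B2.
have H : lam * (t ^+ 2 * (1 + \sum_(l < n) (t1 + b l) / (tm + b l) ^+ 2))
   + (1 - lam) * (t ^+ 2 * (1 + \sum_(l < n) (t2 + b l) / (tm + b l) ^+ 2))
   = t ^+ 2 * (lam * (1 + \sum_(l < n) (t1 + b l) / (tm + b l) ^+ 2)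
   + (1 - lam) * (1 + \sum_(l < n) (t2 + b l) / (tm + b l) ^+ 2)) by ring.
have e' : t * t * Gh b tm = t by rewrite -mulrA et mulr1.
rewrite key expr2 e' in H.
lra.
Qed.

Lemma Gh_decr n (b : 'I_n -> R) (t1 t2 : R) : (0 < n)%N -> (forall l, 0 < b l) ->
  0 < t1 -> t1 < t2 -> Gh b t2 < Gh b t1.
Proof.
move=> n0 b0 t10 t12; rewrite /Gh ltrD2l.
apply: ltr_sum; first by apply/hasP; exists (Ordinal n0); rewrite ?mem_index_enum.
move=> l _; rewrite ltf_pV2 ?posrE ?ltrD2r //.
  by rewrite ltr_wpDl // ltW // (lt_trans t10).
by rewrite ltr_wpDl // ltW.
Qed.

Lemma Gh_inj n (b : 'I_n -> R) (t1 t2 : R) : (0 < n)%N -> (forall l, 0 < b l) ->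
  0 < t1 -> 0 < t2 -> t1 != t2 -> (Gh b t1)^-1 != (Gh b t2)^-1.
Proof.
move=> n0 b0 t10 t20; have G1 := Gh_gt1 b0 (ltW t10); have G2 := Gh_gt1 b0 (ltW t20).
rewrite (inj_eq invr_inj).
case: (ltgtP t1 t2) => // h _.
  by rewrite gt_eqF // Gh_decr.
by rewrite lt_eqF // Gh_decr.
Qed.
Lemma sum_formula (N : nat) (v : nat -> R) (p sg tau : R) :
  0 < p -> 0 <= sg -> 0 < tau -> (forall j : 'I_N, 0 < v j) ->
  \sum_(j < N) ((tau * p * v j ^+ 2 / (tau * p * v j + 1 + sg)) /
     (1 + sg + p * \sum_(l < N) (v l * (1 + sg) / (tau * p * v l + 1 + sg))))
  = (\sum_(j < N) p * v j + (1 + sg)) / (p * (1 + sg)) *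
      (Gh (fun l : 'I_N => (1 + sg) / (p * v l)) tau)^-1 - p^-1.
Proof.
move=> p0 sg0 t0 v0.
set c := 1 + sg.
have c0 : 0 < c by rewrite /c; lra.
set G := Gh _ tau.
have G1 : 1 <= G.
  rewrite /G /Gh lerDl; apply: sumr_ge0 => l _.
  by rewrite invr_ge0 addr_ge0 ?ltW // divr_gt0 // mulr_gt0.
have eD : c + p * \sum_(l < N) (v l * c / (tau * p * v l + 1 + sg)) = c * G.
  rewrite /G /Gh mulrDr mulr1 !mulr_sumr; congr (_ + _); apply: eq_bigr => l _.
  have := v0 l => vl0.
  have h1 : tau * p * v l + c != 0 by rewrite gt_eqF // addr_gt0 // !mulr_gt0.
  have h2 : tau + c / (p * v l) != 0 by rewrite gt_eqF // addr_gt0 // divr_gt0 // mulr_gt0.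
  rewrite -addrA -/c. field.
  by rewrite !gt_eqF // addr_gt0 // !mulr_gt0.
rewrite -big_distrl /= eD.
have eN : \sum_(j < N) (tau * p * v j ^+ 2 / (tau * p * v j + 1 + sg)) =
     p^-1 * (\sum_(j < N) p * v j - c * (G - 1)).
  rewrite /G /Gh addrAC subrr add0r mulr_sumr -sumrB mulr_sumr; apply: eq_bigr => j _.
  have := v0 j => vj0.
  have h1 : tau * p * v j + c != 0 by rewrite gt_eqF // addr_gt0 // !mulr_gt0.
  have h2 : tau + c / (p * v j) != 0 by rewrite gt_eqF // addr_gt0 // divr_gt0 // mulr_gt0.
  rewrite -addrA -/c. field.
  by rewrite !gt_eqF // addr_gt0 // !mulr_gt0.
rewrite eN; field.
by rewrite !gt_eqF //; lra.
Qed.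
End Harm.

Section Model.
Variables (R : realType) (B M N L : nat) (P C : R) (a : nat -> nat -> R).
Hypotheses (hB : (0 < B)%N) (hM : (0 < M)%N) (hL : (0 < L)%N) (hN1 : N = (B * M)%N)
  (hP : 0 < P) (hC : 0 < C)
  (ha : forall b k, (b < B)%N -> (k < N)%N -> 0 < a b k).

Lemma N0 : (0 < N)%N.
Proof. by rewrite hN1 muln_gt0 hB hM. Qed.

Lemma p0 : 0 < P / L%:R.
Proof. by rewrite divr_gt0 // ltr0n. Qed.

Lemma s0 : 0 < L%:R / (N%:R * P).
Proof. by rewrite divr_gt0 ?mulr_gt0 // ltr0n // N0. Qed.

Lemma vv_pos i j : (i < N)%N -> (j < N)%N -> 0 < vv M a i j.
Proof.
move=> hi hj; rewrite /vv; apply: ha => //.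
by rewrite ltn_divLR // -hN1.
Qed.

Lemma pow2_gt1 (y : R) : 0 < y -> 1 < 2 `^ y.
Proof.
move=> y0; rewrite /powR (negbTE (_ : (2 : R) != 0)) ?pnatr_eq0 //.
by rewrite expR_gt1 mulr_gt0 // ln_gt0 // ltr1n.
Qed.

Lemma sigma2_pos i : (i < N)%N -> 0 < sigma2 M N L P C a i.
Proof.
move=> hi; rewrite /sigma2; apply: divr_gt0.
  have hs : 0 <= \sum_(j < N) vv M a i j.
    by apply: sumr_ge0 => j _; rewrite ltW // vv_pos.
  by rewrite ltr_pwDl // mulr_ge0 // ltW // p0.
rewrite subr_gt0; apply: pow2_gt1; rewrite divr_gt0 // ltr0n muln_gt0 hM //.
Qed.

Lemma vbar_pos tau i j : 0 < tau -> (i < N)%N -> (j < N)%N -> 0 < vbar M N L P C a tau i j.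
Proof.
move=> t0 hi hj; have v0 := vv_pos hi hj; have sg0 := sigma2_pos hi.
have pp := p0.
rewrite /vbar /vhat; apply: divr_gt0.
  apply: divr_gt0; first by apply: mulr_gt0; [apply: mulr_gt0 | apply: exprn_gt0].
  have := mulr_gt0 (mulr_gt0 t0 pp) v0; lra.
have hs : 0 <= \sum_(l < N) vtil M N L P C a tau i l.
  apply: sumr_ge0 => l _; have vl := vv_pos hi (ltn_ord l).
  rewrite /vtil ltW // divr_gt0 //; first by apply: mulr_gt0 => //; lra.
  have := mulr_gt0 (mulr_gt0 t0 pp) vl; lra.
have := mulr_ge0 (ltW pp) hs; lra.
Qed.

Definition X tau := N%:R^-1 * \sum_(j < N) vbar M N L P C a tau 0 j.

Definition cc := 1 + sigma2 M N L P C a 0.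
Definition bb := fun l : 'I_N => cc / (P / L%:R * vv M a 0 l).
Definition Qc := (\sum_(j < N) P / L%:R * vv M a 0 j + cc) / (P / L%:R * cc).

Lemma bb_pos l : 0 < bb l.
Proof.
have v0 := vv_pos N0 (ltn_ord l); have sg := sigma2_pos N0.
rewrite /bb /cc; apply: divr_gt0; [lra | exact: mulr_gt0 p0 v0].
Qed.

Lemma Qc_pos : 0 < Qc.
Proof.
have c0 : 0 < cc by have := sigma2_pos N0; rewrite /cc; lra.
have hs : 0 <= \sum_(j < N) P / L%:R * vv M a 0 j.
  by apply: sumr_ge0 => j _; rewrite mulr_ge0 // ltW ?p0 // vv_pos // N0.
rewrite /Qc; apply: divr_gt0; first lra.
exact: mulr_gt0 p0 c0.
Qed.

Lemma X_formula tau : 0 < tau -> X tau = N%:R^-1 * (Qc * (Gh bb tau)^-1 - (P / L%:R)^-1).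
Proof.
move=> t0; rewrite /X; congr (_ * _).
rewrite /vbar /vhat /vtil /Qc /bb /cc; apply: sum_formula => //.
- exact: p0.
- by rewrite ltW // sigma2_pos // N0.
- by move=> j; rewrite vv_pos ?N0.
Qed.

Lemma X_concave x y lam : 0 < x -> 0 < y -> 0 <= lam <= 1 ->
  lam * X x + (1 - lam) * X y <= X (lam * x + (1 - lam) * y).
Proof.
move=> x0 y0 hl.
have tm0 : 0 < lam * x + (1 - lam) * y.
  case/andP: hl => l0 l1; have := mulr_ge0 l0 (ltW x0); case: (ltrP lam 1) => h.
    have : 0 < (1 - lam) * y by apply: mulr_gt0 => //; lra.
    lra.
  have -> : lam = 1 by lra.
  by rewrite mul1r subrr mul0r addr0.
rewrite !X_formula //.
have hc := harm_concave bb_pos x0 y0 hl.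
have hN : 0 < N%:R^-1 :> R by rewrite invr_gt0 ltr0n N0.
have hq := Qc_pos.
have := ler_wpM2l (ltW hq) hc.
set u1 := (Gh bb x)^-1; set u2 := (Gh bb y)^-1; set um := (Gh bb _)^-1.
set k := (P / L%:R)^-1.
move=> h.
rewrite -subr_ge0.
have -> : N%:R^-1 * (Qc * um - k) - (lam * (N%:R^-1 * (Qc * u1 - k)) + (1 - lam) * (N%:R^-1 * (Qc * u2 - k)))
  = N%:R^-1 * (Qc * um - Qc * (lam * u1 + (1 - lam) * u2)) by ring.
by apply: mulr_ge0; [exact: ltW | rewrite subr_ge0].
Qed.

Lemma X_inj x y : 0 < x -> 0 < y -> x != y -> X x != X y.
Proof.
move=> x0 y0 nxy; rewrite !X_formula //.
have := Gh_inj N0 bb_pos x0 y0 nxy.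
apply: contra => /eqP h; apply/eqP.
have hN : N%:R^-1 != 0 :> R by rewrite invr_eq0 pnatr_eq0 -lt0n N0.
move/(mulfI hN)/addIr/(mulfI _): h; apply; rewrite gt_eqF //; exact: Qc_pos.
Qed.

Lemma X_ge0 tau : 0 < tau -> 0 <= X tau.
Proof.
move=> t0; rewrite /X mulr_ge0 // ?invr_ge0 ?ler0n //.
by apply: sumr_ge0 => j _; rewrite ltW // vbar_pos // N0.
Qed.


Lemma tr_diag2 n (f g : 'I_n -> R) :
  \tr (diag_mx (\row_i f i) *m diag_mx (\row_i g i)) = \sum_i f i * g i.
Proof. by apply: eq_bigr => i _; rewrite mul_mx_diag !mxE eqxx mulr1n. Qed.

Variable t : R -> 'I_N -> R[i] -> R[i].
Hypothesis hreg : forall tau : R, 0 < tau -> exists Kt : R,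
      (forall k : 'I_N, Kt = N%:R^-1 * \sum_(i < N) vbar M N L P C a tau i k)
      /\ (forall l : 'I_N, Kt = N%:R^-1 * \sum_(j < N) vbar M N L P C a tau l j).
Hypothesis ht : forall tau : R, 0 < tau ->
      is_T_solution N (Dmat N M N L P C a tau) (t tau).

Lemma Rbar_form tau : 0 < tau -> exists al, 1 <= al /\
  al * (al - 1) = X tau / (L%:R / (N%:R * P)) /\ Rbar M N L P C a t tau = Phi al.
Proof.
move=> t0.
set s := L%:R / (N%:R * P). have s0' : 0 < s := s0.
set vb := vbar M N L P C a tau.
have [r [rpos [rt req]]] := @T_fixed R N vb (t tau) s s0' (ht t0).
have [Kt [hK1 hK2]] := hreg t0.
set x := X tau.
have eKx : Kt = x by rewrite (hK2 (Ordinal N0)).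
have hN : (N%:R : R) != 0 by rewrite pnatr_eq0 -lt0n N0.
have col : forall k : 'I_N, \sum_(i < N) vb i k = N%:R * x.
  by move=> k; rewrite -eKx (hK1 k) mulrA mulfV // mul1r.
have row : forall k : 'I_N, \sum_(j < N) vb k j = N%:R * x.
  by move=> k; rewrite -eKx (hK2 k) mulrA mulfV // mul1r.
have x0 : 0 <= x := X_ge0 t0.
have vb0 : forall i j : 'I_N, 0 <= vb i j by move=> i j; rewrite ltW // vbar_pos.
have hr := @fixed_unique R N vb r s x (Ordinal N0) s0' x0 vb0 rpos col row req.
set rho := r (Ordinal N0) in hr.
have rho0 : 0 < rho := rpos _.
have al0 : 0 < 1 + x * rho by have := mulr_ge0 x0 (ltW rho0); lra.
have inner : forall j : 'I_N, 1 + N%:R^-1 * \sum_(l < N) vb l j * r l = 1 + x * rho.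
  move=> j; rewrite (eq_bigr (fun l : 'I_N => vb l j * rho)) => [|l _]; last by rewrite hr.
  rewrite -mulr_suml col; field; exact: hN.
have hrho : rho * (x / (1 + x * rho) + s) = 1.
  have := req (Ordinal N0); rewrite hr.
  rewrite (eq_bigr (fun j : 'I_N => (1 + x * rho)^-1 * vb (Ordinal N0) j)) => [|j _]; last by rewrite inner.
  rewrite -mulr_sumr row.
  have -> : N%:R^-1 * ((1 + x * rho)^-1 * (N%:R * x)) = x / (1 + x * rho).
    by field; rewrite hN gt_eqF.
  by [].
set al := 1 + x * rho in al0 hrho *.
have srho : s * rho = al^-1.
  have e : s * rho = 1 - rho * (x / al) by rewrite -hrho; ring.
  rewrite e /al; field; by rewrite -/al gt_eqF.
exists al; split; first by have := mulr_ge0 x0 (ltW rho0); rewrite /al; lra.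
split.
  have s0'' : s != 0 by rewrite gt_eqF.
  have r0'' : rho != 0 by rewrite gt_eqF.
  have hs : s = (al * rho)^-1 by rewrite invfM -srho mulfK.
  rewrite hs /al; field; rewrite r0'' /=.
  by rewrite -/al gt_eqF.
have eTP : TPmat N L P (t tau) = diag_mx (\row_(i < N) rho).
  by rewrite /TPmat; congr diag_mx; apply/rowP => i; rewrite !mxE rt hr.
have etr : forall j : 'I_N,
    N%:R^-1 * \tr (Dmat N M N L P C a tau j *m diag_mx (\row_(i < N) rho)) = x * rho.
  move=> j; rewrite /Dmat tr_diag2 -mulr_suml col; field; exact: hN.
rewrite /Rbar /= eTP.
under eq_bigr do rewrite etr.
rewrite [X in _ - N%:R^-1 * X](eq_bigr (fun j : 'I_N => x * rho / (1 + x * rho))); last first.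
  by move=> j _; rewrite etr.
rewrite !sumr_const card_ord -/s detZ det_diag.
under eq_bigr do rewrite mxE.
rewrite prodr_const card_ord -exprMn (lnXn _ (mulr_gt0 s0' rho0)) srho lnV ?posrE ?invr_gt0 //.
have hNc : forall c : R, N%:R^-1 * (c *+ N) = c.
  by move=> c; rewrite -[c *+ N]mulr_natr mulrCA mulVf // mulr1.
rewrite !hNc /Phi -/al.
have -> : al - 1 = x * rho by rewrite /al; ring.
lra.
Qed.

Lemma theorem3_aux : strictly_concave_pos (Rbar M N L P C a t).
Proof.
move=> x y lam x0 y0 nxy hl.
have hl' : 0 <= lam <= 1 by case/andP: hl => l0 l1; rewrite !ltW.
have tm0 : 0 < lam * x + (1 - lam) * y.
  case/andP: hl => l0 l1; have := mulr_gt0 l0 x0.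
  have : 0 < (1 - lam) * y by apply: mulr_gt0 => //; lra.
  lra.
have [a1 [h1 [w1 e1]]] := Rbar_form x0.
have [a2 [h2 [w2 e2]]] := Rbar_form y0.
have [am [hm [wm em]]] := Rbar_form tm0.
rewrite e1 e2 em.
have sp := s0.
apply: (final_comb h1 h2 hm _ hl w1 w2 wm).
  apply: contra (X_inj x0 y0 nxy) => /eqP e; apply/eqP.
  have : X x / (L%:R / (N%:R * P)) = X y / (L%:R / (N%:R * P)) by rewrite -w1 -w2 e.
  by move/(mulIf (invr_neq0 (lt0r_neq0 sp))).
have hc := X_concave x0 y0 hl'.
have spi : 0 < (L%:R / (N%:R * P))^-1 by rewrite invr_gt0.
have := ler_wpM2r (ltW spi) hc.
by rewrite mulrDl !mulrA.
Qed.
End Model.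

Unset Implicit Arguments.
Unset Strict Implicit.

Theorem theorem3 (R : realType) (B M K L N : nat) (P C : R)
  (a : nat -> nat -> R)
  (hB : (0 < B)%N) (hM : (0 < M)%N) (hK : (0 < K)%N) (hL : (0 < L)%N)
  (hN1 : N = (B * M)%N) (hN2 : N = K)
  (hP : 0 < P) (hC : 0 < C)
  (ha : forall b k, (b < B)%N -> (k < K)%N -> 0 < a b k)
  (hreg : forall tau : R, 0 < tau -> exists Kt : R,
      (forall k : 'I_N, Kt = N%:R^-1 * \sum_(i < N) vbar M K L P C a tau i k)
      /\ (forall l : 'I_N, Kt = N%:R^-1 * \sum_(j < N) vbar M K L P C a tau l j))
  (t : R -> 'I_N -> R[i] -> R[i])
  (ht : forall tau : R, 0 < tau ->
      is_T_solution K (Dmat N M K L P C a tau) (t tau)) :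
  strictly_concave_pos (Rbar M K L P C a t).
Proof.
subst K.
exact: (theorem3_aux hB hM hL hN1 hP hC ha hreg ht).
Qed.
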